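(* Let $w=(w_\sigma)_{\sigma\in\mathscr{I}}$ index an Ekedahl–Oort stratum $M_w$, let $x\in M_w(k)$ be a geometric point, and let $\{\tau,\bar\tau\}\in\mathscr{I}^+$ with $\tau=i\in\mathscr{I}_\mathfrak{P}$, writing $\mathfrak{f}(i)=r_\tau$ and $\mathfrak{f}(i-1)=r_{\phi^{-1}\circ\tau}$. Then $r_V\{\tau,\bar\tau\}(x)=r_V^{\rm ord}\{\tau,\bar\tau\}$ if and only if: (a) in case $\mathfrak{f}(i-1)\le\mathfrak{f}(i)$: $\#\{j:\ j\le d-\mathfrak{f}(i-1),\ w_i(j)\le\mathfrak{f}(i)\}=\mathfrak{f}(i)-\mathfrak{f}(i-1)$; (b) in case $\mathfrak{f}(i)\le\mathfrak{f}(i-1)$: $\#\{j:\ d-\mathfrak{f}(i-1)+1\le j,\ \mathfrak{f}(i)+1\le w_i(j)\}=\mathfrak{f}(i-1)-\mathfrak{f}(i)$. (When $\mathfrak{f}(i-1)=\mathfrak{f}(i)$ both conditions are equivalent.)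
   Context: Notation for unitary Shimura varieties: $K$ CM of degree $2g$, $\mathscr{I}=\mathrm{Hom}(\mathcal{O}_K,\kappa)$ (via a fixed embedding), $\bar\tau=\tau\circ\rho$, $\mathscr{I}^+$ the pairs $\{\tau,\bar\tau\}$, signature $(r_\tau)$ with $r_\tau+r_{\bar\tau}=d$. For a prime $\mathfrak{P}\mid p$ of $K$, $\mathscr{I}_\mathfrak{P}$ are the embeddings factoring through $\mathcal{O}_K/\mathfrak{P}$; Frobenius permutes $\mathscr{I}_\mathfrak{P}$ cyclically, and when $\tau$ is written $i$, $\phi\circ\tau$ is written $i+1$ and $\phi^{-1}\circ\tau$ is written $i-1$; $\mathfrak{f}(i)=r_i$. $M$ is the special fiber over $\kappa$ of the PEL unitary moduli space; $\mathcal{P}_\tau=\underline\omega[\tau]$, $V:\mathcal{P}_\tau\to\Phi^*_M\mathcal{P}_{\phi^{-1}\circ\tau}$ induced by Verschiebung; $r_V\{\tau,\bar\tau\}(x)=\dim\ker(V\otimes V)$ on $(\mathcal{P}_\tau\otimes\mathcal{P}_{\bar\tau})_x$, and $r_V^{\rm ord}\{\tau,\bar\tau\}=\max\{0,r_\tau-r_{\phi^{-1}\circ\tau}\}(d-r_\tau)+r_\tau\max\{0,r_{\phi^{-1}\circ\tau}-r_\tau\}$. An $(e,d-e)$-shuffle is a permutation $\pi$ of $\{1,\dots,d\}$ with $\pi^{-1}(1)<\dots<\pi^{-1}(e)$ and $\pi^{-1}(e+1)<\dots<\pi^{-1}(d)$; $\Pi_{e,d-e}$ is the set of these; $w_0(\nu)=d+1-\nu$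 and $\check\pi=w_0\pi w_0$. By Moonen, EO strata $M_w$ of $M$ correspond bijectively to tuples $w=(w_\sigma)_{\sigma\in\mathscr{I}}$ with $w_\sigma\in\Pi_{r_\sigma,d-r_\sigma}$ and $w_{\bar\sigma}=\check w_\sigma$, such that for geometric $x\in M_w(k)$ the Dieudonné module of $A_x[p]$ is isomorphic (with $\mathcal{O}_K$-action) to $N_w=\bigoplus_{i\in\mathscr{I}}\bigoplus_{j=1}^dke_{i,j}$ ($\mathcal{O}_K$ acting on the $i$-summand via $i$) with $F(e_{i,j})=0$ if $w_i(j)\le\mathfrak{f}(i)$, $F(e_{i,j})=e_{i+1,m}$ if $w_i(j)=\mathfrak{f}(i)+m$; $V(e_{i+1,j})=0$ if $j\le d-\mathfrak{f}(i)$, $V(e_{i+1,j})=e_{i,n}$ if $j=d-\mathfrak{f}(i)+w_i(n)$ ($F$ $\phi$-semilinear, $V$ $\phi^{-1}$-semilinear); and $\dim M_w=\sum_{\{\sigma,\bar\sigma\}\in\mathscr{I}^+}\ell(w_\sigma)$, $\ell$ the length in $\mathfrak{S}_d$. The fiber $\mathcal{P}_{\tau,x}$ is identified with the $\tau$-part of $N_w[F]$. *)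

(* Defs.v *)
From HB Require Import structures.
From mathcomp Require Import all_boot all_order all_algebra all_fingroup.
From mathcomp Require Export mxtens.
Set Implicit Arguments. Unset Strict Implicit. Unset Printing Implicit Defensive.
Import GRing.Theory.
Local Open Scope ring_scope.

(* Embeddings I = Hom(O_K, kappa) form a finite type; phi is the Frobenius
   (a permutation of I whose orbits are the I_P), rho the complex conjugation
   (fixed-point-free involution commuting with phi).  Indices j in 'I_d are
   0-indexed: j : 'I_d stands for j+1 in {1..d}; similarly for values of w. *)

(* (e, d-e)-shuffle: pi^{-1}(1) < ... < pi^{-1}(e) and
   pi^{-1}(e+1) < ... < pi^{-1}(d). *)
Definition is_shuffle (d e : nat) (pi : 'S_d) : Prop :=
  forall a b : 'I_d, (a < b)%N ->
    ((b < e)%N || (e <= a)%N) -> ((pi^-1)%g a < (pi^-1)%g b)%N.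

(* The standard Dieudonne module N_w = (+)_{i, j} k e_{i,j}.  Matrices act on
   row vectors of coordinates in the basis (e_{s,j})_j of the s-summand.       *)

(* F restricted to the s-summand, valued in the (phi s)-summand:
   F(e_{s,j}) = e_{phi s, m} if w_s(j) = r_s + m, and 0 if w_s(j) <= r_s. *)
Definition Fmat (K : fieldType) (I : finType) (d : nat) (r : I -> nat)
    (w : I -> 'S_d) (s : I) : 'M[K]_d :=
  \matrix_(j, m) (((w s j : nat) == r s + m)%N)%:R.

(* V restricted to the t-summand, valued in the (phi^-1 t)-summand; with
   s = phi^-1 t (so t = s+1):  V(e_{s+1,j}) = 0 if j <= d - r_s, and
   V(e_{s+1,j}) = e_{s,n} if j = d - r_s + w_s(n). *)
Definition Vmat (K : fieldType) (I : finType) (phi : {perm I}) (d : nat)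
    (r : I -> nat) (w : I -> 'S_d) (t : I) : 'M[K]_d :=
  let s := (phi^-1)%g t in
  \matrix_(j, n) (((j : nat) == d - r s + w s n)%N)%:R.

Definition Pfib (K : fieldType) (I : finType) (d : nat) (r : I -> nat)
    (w : I -> 'S_d) (s : I) : 'M[K]_d :=
  kermx (Fmat K r w s).

Definition rV (K : fieldType) (I : finType) (phi : {perm I}) (rho : I -> I)
    (d : nat) (r : I -> nat) (w : I -> 'S_d) (tau : I) : nat :=
  \rank ((Pfib K r w tau *t Pfib K r w (rho tau))
          :&: kermx (Vmat K phi r w tau *t Vmat K phi r w (rho tau)))%MS.

(* r_V^ord{tau,taubar}; nat subtraction is truncated, i.e. max{0, _}. *)
Definition rVord (I : finType) (phi : {perm I}) (d : nat) (r : I -> nat)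
    (tau : I) : nat :=
  ((r tau - r ((phi^-1)%g tau)) * (d - r tau)
   + r tau * (r ((phi^-1)%g tau) - r tau))%N.

(* Main.v *)
Require Import Defs.

From HB Require Import structures.
From mathcomp Require Import all_boot all_order all_algebra all_fingroup.
From mathcomp Require Import mxtens.
Set Implicit Arguments. Unset Strict Implicit. Unset Printing Implicit Defensive.
Import GRing.Theory.
Local Open Scope ring_scope.

Section Gen.
Variable F : fieldType.

Definition dmx n (P : pred 'I_n) : 'M[F]_n := diag_mx (\row_i ((P i)%:R : F)).

Lemma dmxE n (P : pred 'I_n) i j : dmx P i j = ((P i) && (i == j))%:R.
Proof. by rewrite !mxE; case: (P i); case: (i == j). Qed.

Lemma dmx_mul n (P Q : pred 'I_n) : dmx P *m dmx Q = dmx (predI P Q).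
Proof.
apply/matrixP=> i j; rewrite mul_mx_diag !mxE /=.
by case: eqP => [->|_]; case: (P j); case: (Q j); rewrite ?mulr1n ?mulr0n ?mulr1 ?mulr0 ?mul0r.
Qed.

Lemma dmx_idem n (P : pred 'I_n) : dmx P *m dmx P = dmx P.
Proof. by rewrite dmx_mul; apply/matrixP=> i j; rewrite !dmxE /= andbb. Qed.

Lemma dmx_sub m n (P : pred 'I_n) (A : 'M[F]_(m, n)) :
  (A <= dmx P)%MS = (A *m dmx P == A).
Proof.
apply/idP/eqP.
  by case/submxP=> X ->; rewrite -mulmxA dmx_idem.
by move=> <-; apply: submxMl.
Qed.


Lemma dmxC n (P : pred 'I_n) : dmx (predC P) = 1%:M - dmx P.
Proof.
apply/matrixP=> i j; rewrite !mxE /=.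
by case: eqP => [->|_]; case: (P j); rewrite ?mulr1n ?mulr0n ?subr0 ?subrr.
Qed.

Lemma kermx_dmx n (P : pred 'I_n) : (kermx (dmx P) :=: dmx (predC P))%MS.
Proof.
apply/eqmxP/andP; split.
  by rewrite dmx_sub dmxC mulmxBr mulmx1 mulmx_ker subr0.
rewrite sub_kermx dmx_mul; apply/eqP/matrixP=> i j; rewrite dmxE !mxE /=.
by case: (P i).
Qed.

Lemma ker_transfer m n (M : 'M[F]_(m,n)) (D : 'M[F]_m) (W : 'M[F]_(n,m)) :
  M = D *m M -> M *m W = D -> (kermx M :=: kermx D)%MS.
Proof.
move=> E1 E2; apply/eqmxP/andP; split; rewrite sub_kermx.
  by rewrite -E2 mulmxA mulmx_ker mul0mx.
by rewrite E1 mulmxA mulmx_ker mul0mx.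
Qed.

Lemma tens_sub m1 m1' n m2 m2' p (A : 'M[F]_(m1,n)) (A' : 'M[F]_(m1',n))
  (B : 'M[F]_(m2,p)) (B' : 'M[F]_(m2',p)) :
  (A <= A')%MS -> (B <= B')%MS -> (A *t B <= A' *t B')%MS.
Proof.
by case/submxP=> X ->; case/submxP=> Y ->; rewrite -tensmx_mul submxMl.
Qed.

Lemma tens_eqmx m1 m1' n m2 m2' p (A : 'M[F]_(m1,n)) (A' : 'M[F]_(m1',n))
  (B : 'M[F]_(m2,p)) (B' : 'M[F]_(m2',p)) :
  (A :=: A')%MS -> (B :=: B')%MS -> (A *t B :=: A' *t B')%MS.
Proof.
move=> e1 e2; apply/eqmxP/andP; split; apply: tens_sub; rewrite ?e1 ?e2 //.
Qed.

Lemma tens_dmx n p (P : pred 'I_n) (Q : pred 'I_p) :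
  dmx P *t dmx Q = dmx (fun k => P (mxtens_unindex k).1 && Q (mxtens_unindex k).2).
Proof.
apply/matrixP=> i j.
case: (mxtens_indexP i) => i1 i2; case: (mxtens_indexP j) => j1 j2.
rewrite tensmxE !dmxE mxtens_indexK /= (inj_eq (can_inj (@mxtens_indexK n p))).
rewrite xpair_eqE.
by case: (P i1); case: (Q i2); case: (i1 == j1); case: (i2 == j2); rewrite ?mulr1 ?mulr0 ?mul0r.
Qed.

Section PU.
Variables (n : nat) (R : 'I_n -> 'I_n -> bool).
Hypothesis HR : forall j j' m m', R j m -> R j' m' -> (j == j') = (m == m').
Definition PUmx : 'M[F]_n := \matrix_(j, m) (R j m)%:R.
Definition PUQ : pred 'I_n := fun j => [exists m, R j m].

Lemma PU_left : PUmx = dmx PUQ *m PUmx.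
Proof.
apply/matrixP=> j m; rewrite mul_diag_mx !mxE.
case Rjm: (R j m); last by rewrite mulr0.
have HQ : PUQ j = true by apply/existsP; exists m.
by rewrite HQ mulr1.
Qed.

Lemma PU_right : PUmx *m PUmx^T = dmx PUQ.
Proof.
apply/matrixP=> j j'; rewrite dmxE !mxE.
case: (boolP (PUQ j)) => [/existsP[m0 Rm0]|nQ] /=.
  rewrite (bigD1 m0) //= big1 ?addr0.
    rewrite !mxE Rm0 mul1r.
    case Rj': (R j' m0); first by rewrite (HR Rm0 Rj') eqxx.
    case: eqP => // E; by rewrite -E Rm0 in Rj'.
  move=> m nm; rewrite !mxE.
  case Rjm: (R j m); last by rewrite mul0r.
  by move: (HR Rm0 Rjm); rewrite eqxx eq_sym (negPf nm).
rewrite big1 // => m _; rewrite !mxE.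
case Rjm: (R j m); last by rewrite mul0r.
by case/existsP: nQ; exists m.
Qed.

Lemma PU_ker : (kermx PUmx :=: dmx (predC PUQ))%MS.
Proof.
apply: eqmx_trans (kermx_dmx PUQ).
exact: ker_transfer PU_left PU_right.
Qed.
End PU.

Lemma PU_tens_ker n p (R1 : 'I_n -> 'I_n -> bool) (R2 : 'I_p -> 'I_p -> bool) :
  (forall j j' m m', R1 j m -> R1 j' m' -> (j == j') = (m == m')) ->
  (forall j j' m m', R2 j m -> R2 j' m' -> (j == j') = (m == m')) ->
  (kermx (PUmx R1 *t PUmx R2) :=:
     dmx (predC (fun k => PUQ R1 (mxtens_unindex k).1 && PUQ R2 (mxtens_unindex k).2)))%MS.
Proof.
move=> H1 H2.
apply: eqmx_trans (kermx_dmx _).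
rewrite -tens_dmx.
apply: (ker_transfer (W := (PUmx R1)^T *t (PUmx R2)^T)).
  by rewrite tensmx_mul -!PU_left.
by rewrite tensmx_mul !PU_right.
Qed.


Lemma row_dmx n (P : pred 'I_n) i :
  row i (dmx P) = if P i then delta_mx 0 i else 0.
Proof.
apply/matrixP=> a j; rewrite mxE dmxE (ord1 a).
by case: (P i); rewrite ?mxE ?eqxx /= 1?eq_sym.
Qed.

Lemma rank_dmx n (P : pred 'I_n) : \rank (dmx P) = #|P|.
Proof.
have Hd := @mxdirect_delta F _ P n id (fun _ _ _ _ => id).
have E : (dmx P :=: (\sum_(i | P i) <<delta_mx 0 i : 'rV[F]_n>>))%MS.
  apply/eqmxP/andP; split.
    apply/row_subP=> i; rewrite row_dmx; case Pi: (P i); last exact: sub0mx.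
    by apply: (sumsmx_sup i) => //; rewrite genmxE.
  apply/sumsmx_subP=> i Pi; rewrite genmxE dmx_sub -rowE row_dmx Pi.
  by [].
rewrite E (mxdirectP Hd) /= -sum1_card.
by apply: eq_bigr => i _; rewrite mxrank_gen mxrank_delta.
Qed.

Lemma cap_dmx n (P Q : pred 'I_n) : (dmx P :&: dmx Q :=: dmx (predI P Q))%MS.
Proof.
apply/eqmxP/andP; split.
  rewrite dmx_sub -dmx_mul mulmxA.
  by move: (capmxSl (dmx P) (dmx Q)) (capmxSr (dmx P) (dmx Q)); rewrite !dmx_sub => /eqP-> /eqP->.
rewrite sub_capmx !dmx_sub !dmx_mul; apply/andP; split; apply/eqP/matrixP=> i j;
  by rewrite !dmxE /=; case: (P i); case: (Q i).
Qed.

End Gen.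
From mathcomp Require Import mxtens.
Lemma card_rev d (P : pred 'I_d) :
  #|[set k : 'I_d | P (rev_ord k)]| = #|[set k : 'I_d | P k]|.
Proof.
rewrite -(card_imset _ (@rev_ord_inj d)); apply: eq_card => k.
rewrite inE; apply/imsetP/idP.
  by case=> x; rewrite inE => Px ->.
by move=> Pk; exists (rev_ord k); rewrite ?inE rev_ordK.
Qed.

Lemma pair_count d (a c : pred 'I_d) :
  #|[set x : 'I_d * 'I_d | (a x.1 && ~~ a (rev_ord x.2)) && (c x.1 || ~~ c (rev_ord x.2))]|
  = (#|[set j | a j && c j]| * (#|[set j | ~~ a j && c j]| + #|[set j | ~~ a j && ~~ c j]|)
     + #|[set j | a j && ~~ c j]| * #|[set j | ~~ a j && ~~ c j]|)%N.
Proof.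
set X1 := [set j | a j && c j]; set X2 := [set j | a j && ~~ c j].
set B := [set k : 'I_d | ~~ a (rev_ord k)]; set BD := [set k : 'I_d | ~~ a (rev_ord k) && ~~ c (rev_ord k)].
have -> : [set x : 'I_d * 'I_d | (a x.1 && ~~ a (rev_ord x.2)) && (c x.1 || ~~ c (rev_ord x.2))]
   = setX X1 B :|: setX X2 BD.
  apply/setP=> [[i j]]; rewrite !inE /=.
  by case: (a i); case: (c i); case: (a (rev_ord j)); case: (c (rev_ord j)).
rewrite cardsU.
have -> : setX X1 B :&: setX X2 BD = set0.
  apply/setP=> [[i j]]; rewrite !inE /=.
  by case: (a i); case: (c i); rewrite ?andbF ?andbT /=.
rewrite cards0 subn0 !cardsX.
have -> : #|B| = #|[set j | ~~ a j]| by rewrite /B (card_rev (fun k => ~~ a k)).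
have -> : #|BD| = #|[set j | ~~ a j && ~~ c j]| by rewrite /BD (card_rev (fun k => ~~ a k && ~~ c k)).
congr (_ * _ + _)%N.
rewrite -(cardsID [set j | c j] [set j | ~~ a j]).
by congr (_ + _)%N; apply: eq_card => j; rewrite !inE /= 1?andbC.
Qed.
From mathcomp Require Import zify.
Local Close Scope ring_scope.
Lemma arith (n1 n2 n3 n4 : nat) :
  (n1*((n1+n2+n3+n4) - (n1+n2)) + n2*n4 = ((n1+n2) - (n2+n4)) * ((n1+n2+n3+n4) - (n1+n2)) + (n1+n2) * ((n2+n4) - (n1+n2)))%N <->
  (((n2+n4) <= n1+n2)%N -> n1 = (n1+n2) - (n2+n4)) /\ ((n1+n2 <= n2+n4)%N -> n4 = (n2+n4) - (n1+n2)).
Proof.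
have -> : ((n1+n2+n3+n4) - (n1+n2) = n3 + n4)%N by lia.
have [h|h] := leqP n4 n1.
- have -> : ((n1+n2) - (n2+n4) = n1 - n4)%N by lia.
  have -> : ((n2+n4) - (n1+n2) = 0)%N by lia.
  rewrite muln0 addn0.
  have [k ->] : exists k, n1 = n4 + k by exists (n1 - n4); lia.
  split.
  + move=> E. have: (n4 * (n4+k+n2+n3+n4) = 0)%N by nia.
    move/eqP; rewrite muln_eq0 => /orP[/eqP z|/eqP z]; lia.
  + case=> H1 H2. have z : n4 = 0%N by lia. subst n4. nia.
- have -> : ((n1+n2) - (n2+n4) = 0)%N by lia.
  have -> : ((n2+n4) - (n1+n2) = n4 - n1)%N by lia.
  rewrite mul0n add0n.
  have [k ->] : exists k, n4 = n1 + k by exists (n4 - n1); lia.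
  split.
  + move=> E. have: (n1 * (n1+k+n2+n3+n1) = 0)%N by nia.
    move/eqP; rewrite muln_eq0 => /orP[/eqP z|/eqP z]; lia.
  + case=> H1 H2. have z : n1 = 0%N by lia. subst n1. nia.
Qed.

From mathcomp Require Import zify.

Lemma card_bij d (g h : 'I_d -> 'I_d) (gK : cancel g h) (hK : cancel h g) (P : pred 'I_d) :
  #|[set k : 'I_d | P (g k)]| = #|[set k : 'I_d | P k]|.
Proof.
rewrite -(card_imset _ (can_inj gK)); apply: eq_card => k.
rewrite inE; apply/imsetP/idP.
  by case=> x; rewrite inE => Px ->.
by move=> Pk; exists (h k); rewrite ?inE hK.
Qed.

Lemma card_lt d m : (m <= d)%N -> #|[set j : 'I_d | (j < m)%N]| = m.
Proof.
move=> hm; rewrite -[RHS]card_ord -(card_imset _ (fun x y (e : widen_ord hm x = widen_ord hm y) => val_inj (congr1 val e : val x = val y))).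
apply: eq_card => k; rewrite inE; apply/idP/imsetP.
  by move=> h; exists (Ordinal h) => //; apply: val_inj.
by case=> x _ ->; rewrite /= ltn_ord.
Qed.

Lemma card_split d (P Q : pred 'I_d) :
  (#|[set j | P j && Q j]| + #|[set j | P j && ~~ Q j]|)%N = #|[set j | P j]|.
Proof.
rewrite -(cardsID [set j | Q j] [set j | P j]).
by congr (_ + _)%N; apply: eq_card => j; rewrite !inE /= 1?andbC.
Qed.

Lemma exQ_shift n x c : (x < n)%N -> [exists m : 'I_n, (x == c + m)%N] = (c <= x)%N.
Proof.
move=> hx; apply/existsP/idP => [[m /eqP->]|h]; first exact: leq_addr.
have hm : (x - c < n)%N by lia.
by exists (Ordinal hm); apply/eqP => /=; lia.
Qed.

Lemma exQ_perm n (f : 'S_n) (j : nat) c :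
  [exists m, (j == c + f m)%N] = [exists v : 'I_n, (j == c + v)%N].
Proof.
apply/existsP/existsP => [[m h]|[v h]]; first by exists (f m).
by exists ((f^-1)%g v); rewrite permKV.
Qed.

Lemma inj_F n (f : 'S_n) c (j j' m m' : 'I_n) :
  ((f j : nat) == c + m)%N -> ((f j' : nat) == c + m')%N -> (j == j') = (m == m').
Proof.
move=> /eqP e1 /eqP e2; apply/eqP/eqP => [E|E].
  by subst j'; apply: ord_inj; lia.
subst m'; apply: (@perm_inj _ f); apply: ord_inj; lia.
Qed.

Lemma inj_V n (f : 'S_n) c (j j' m m' : 'I_n) :
  ((j : nat) == c + f m)%N -> ((j' : nat) == c + f m')%N -> (j == j') = (m == m').
Proof.
move=> /eqP e1 /eqP e2; apply/eqP/eqP => [E|E].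
  subst j'; apply: (@perm_inj _ f); apply: ord_inj; lia.
by subst m'; apply: ord_inj; lia.
Qed.

Theorem mainTheorem13
  (p : nat) (K : closedFieldType) (I : finType)
  (phi : {perm I}) (rho : I -> I) (d : nat) (r : I -> nat) (w : I -> 'S_d)
  (tau : I) :
  prime p -> (p \in [pchar K])%R ->
  (forall s, rho (rho s) = s) -> (forall s, rho s != s) ->
  (forall s, phi (rho s) = rho (phi s)) ->
  (forall s, (r s + r (rho s))%N = d) ->
  (forall s, is_shuffle (r s) (w s)) ->
  (forall s (j : 'I_d), w (rho s) j = rev_ord (w s (rev_ord j))) ->
  (rV K phi rho r w tau = rVord phi d r tau <->
   (((r ((phi^-1)%g tau) <= r tau)%N ->
       #|[set j : 'I_d | ((j < d - r ((phi^-1)%g tau))%N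
                          && ((w tau j : nat) < r tau)%N)]|
       = (r tau - r ((phi^-1)%g tau))%N)
    /\
    ((r tau <= r ((phi^-1)%g tau))%N ->
       #|[set j : 'I_d | ((d - r ((phi^-1)%g tau) <= j)%N
                          && (r tau <= (w tau j : nat))%N)]|
       = (r ((phi^-1)%g tau) - r tau)%N))).
Proof.
move=> _ _ rhoK _ phirho rsum _ wrho.
have r_le u : (r u <= d)%N by rewrite -(rsum u) leq_addr.
have rs_rho u : r (rho u) = (d - r u)%N by move: (rsum u); lia.
set s := (phi^-1)%g tau.
have s_rho : (phi^-1)%g (rho tau) = rho s.
  by apply: (@perm_inj _ phi); rewrite permKV phirho /s permKV.
pose a : pred 'I_d := fun j => (w tau j < r tau)%N.
pose c : pred 'I_d := fun j => (j < d - r s)%N.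
have eF u : Fmat K r w u = PUmx K (fun j m => ((w u j : nat) == r u + m)%N) by [].
have eV u : Vmat K phi r w u =
   PUmx K (fun j n => ((j : nat) == d - r ((phi^-1)%g u) + w ((phi^-1)%g u) n)%N) by [].
have hQ1 j : PUQ (fun j m : 'I_d => ((w tau j : nat) == r tau + m)%N) j = ~~ a j.
  by rewrite /PUQ exQ_shift ?ltn_ord // /a -leqNgt.
have hQ2 k : PUQ (fun j m : 'I_d => ((w (rho tau) j : nat) == r (rho tau) + m)%N) k = a (rev_ord k).
  rewrite /PUQ exQ_shift ?ltn_ord // wrho rs_rho /a /=.
  have := ltn_ord (w tau (rev_ord k)); have := r_le tau.
  by move=> h1 h2; apply/idP/idP => ?; lia.
have hQ3 j : PUQ (fun j m : 'I_d => ((j : nat) == d - r s + w s m)%N) j = ~~ c j.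
  by rewrite /PUQ exQ_perm exQ_shift ?ltn_ord // /c -leqNgt.
have hQ4 k : PUQ (fun j m : 'I_d => ((j : nat) == d - r ((phi^-1)%g (rho tau)) + w ((phi^-1)%g (rho tau)) m)%N) k = c (rev_ord k).
  rewrite s_rho /PUQ exQ_perm exQ_shift ?ltn_ord // rs_rho /c /=.
  have := ltn_ord k; have := r_le s.
  by move=> h1 h2; apply/idP/idP => ?; lia.
have HV : rV K phi rho r w tau =
  #|[set x : 'I_d * 'I_d | (a x.1 && ~~ a (rev_ord x.2)) && (c x.1 || ~~ c (rev_ord x.2))]|.
  rewrite /rV /Pfib !eF !eV.
  have E1 := cap_eqmx (tens_eqmx (@PU_ker K _ _ (@inj_F d (w tau) (r tau)))
                                 (@PU_ker K _ _ (@inj_F d (w (rho tau)) (r (rho tau)))))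
                      (@PU_tens_ker K _ _ _ _ (@inj_V d (w ((phi^-1)%g tau)) (d - r ((phi^-1)%g tau)))
                                   (@inj_V d (w ((phi^-1)%g (rho tau))) (d - r ((phi^-1)%g (rho tau))))).
  rewrite tens_dmx in E1.
  rewrite E1 cap_dmx rank_dmx.
  rewrite -(card_imset _ (can_inj (@mxtens_unindexK d d))).
  apply: eq_card => x; rewrite inE.
  apply/imsetP/idP.
    case=> k; rewrite inE => Tk ->; move: Tk.
    by rewrite /= -/s hQ1 hQ2 hQ3 hQ4 !negbK negb_and negbK.
  move=> Hx; exists (mxtens_index x); last by rewrite mxtens_indexK.
  move: Hx; case: x => x1 x2.
  have e1 : Ordinal (@mxtens_index_proof1 d d (mxtens_index (x1,x2))) = x1 :=
    congr1 fst (mxtens_indexK (x1, x2)).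
  have e2 : Ordinal (@mxtens_index_proof2 d d (mxtens_index (x1,x2))) = x2 :=
    congr1 snd (mxtens_indexK (x1, x2)).
  by rewrite inE /= e1 e2 -/s hQ1 hQ2 hQ3 hQ4 !negbK negb_and negbK.
rewrite HV pair_count.
set n1 := #|[set j | a j && c j]|.
set n2 := #|[set j | a j && ~~ c j]|.
set n3 := #|[set j | ~~ a j && c j]|.
set n4 := #|[set j | ~~ a j && ~~ c j]|.
have hA : #|[set j | a j]| = r tau.
  rewrite /a (card_bij (permK (w tau)) (permKV (w tau)) (fun v : 'I_d => (v < r tau)%N)).
  exact: card_lt.
have hC : #|[set j | c j]| = (d - r s)%N by rewrite /c card_lt // leq_subr.
have tot (Q : pred 'I_d) : (#|[set j | Q j]| + #|[set j | ~~ Q j]|)%N = d.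
  rewrite -[RHS]card_ord -(cardsC [set j | Q j]); congr (_ + _)%N.
  by apply: eq_card => j; rewrite !inE.
have h12 : (n1 + n2)%N = r tau by rewrite /n1 /n2 card_split hA.
have h34 : (n3 + n4)%N = (d - r tau)%N.
  rewrite /n3 /n4 card_split; have := tot a; rewrite hA; lia.
have h24 : (n2 + n4)%N = r s.
  have := card_split (fun j => ~~ c j) a.
  have := tot c; rewrite hC.
  have -> : #|[set j | ~~ c j && a j]| = n2 by apply: eq_card => j; rewrite !inE andbC.
  have -> : #|[set j | ~~ c j && ~~ a j]| = n4 by apply: eq_card => j; rewrite !inE andbC.
  have := r_le s; lia.
have -> : #|[set j : 'I_d | ((j < d - r s)%N && ((w tau j : nat) < r tau)%N)]| = n1.
  by apply: eq_card => j; rewrite !inE andbC.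
have -> : #|[set j : 'I_d | ((d - r s <= j)%N && (r tau <= (w tau j : nat))%N)]| = n4.
  by apply: eq_card => j; rewrite !inE /a /c -!leqNgt andbC.
rewrite /rVord -/s h34 -h12 -h24.
have := r_le tau; have -> : (d - (n1 + n2) = (n1 + n2 + n3 + n4) - (n1 + n2))%N by lia.
move=> _.
exact: arith.
Qed.
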